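(* Let $G=(V,E)$ be a simple directed acyclic graph with capacities $C\in\mathbb{R}_{\ge 0}^E$, let $s,t\in V$ be such that a directed $s$-$t$ path exists, and let $\gamma$ satisfy $0<\gamma\le\min_{e\in E}C(e)$. For every $s$-$t$ flow $\mathbf{f}$ with $val(\mathbf{f})<\gamma$ there exists an $s$-$t$ flow $\mathbf{f}'$ with $val(\mathbf{f}')=\gamma$ such that $\Lambda(\mathbf{f}',P)\ge\Lambda(\mathbf{f},P)$ for every set of user paths $P$ (with any admissible initial flow values).
   Context: An $s$-$t$ flow is a vector $\mathbf{f}\in\mathbb{R}^E$ with $0\le\mathbf{f}(e)\le C(e)$ for all $e\in E$ and $\sum_{(u,v)\in E}\mathbf{f}(u,v)=\sum_{(v,u)\in E}\mathbf{f}(v,u)$ for all $v\in V\setminus\{s,t\}$; its value is $val(\mathbf{f})=\sum_{(s,u)\in E}\mathbf{f}(s,u)$. A set of user paths is a set $P=\{p_1,\dots,p_k\}$ of directed paths in $G$ (each viewed as a set of edges; they need not share endpoints nor be disjoint) together with initial flow values $\lambda_1,\dots,\lambda_k\ge 0$ satisfying $\sum_{i:e\in p_i}\lambda_i\le C(e)$ for all $e\in E$. For an $s$-$t$ flow $\mathbf{f}$, $T(\mathbf{f},P)$ is the optimal value of the linear program: maximize $\sum_i\tilde\lambda_i$ subject to $\sum_{i:e\in p_i}\tilde\lambda_i\le C(e)-\mathbf{f}(e)$ for all $e\in E$ and $0\le\tilde\lambda_i\le\lambda_i$ for all $i$. The throughput reduction is $\Lambda(\mathbf{f},P)=\sum_i\lambda_i-T(\mathbf{f},P)$.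 *)

(* Defs.v *)
From HB Require Import structures.
From mathcomp Require Import all_boot all_order all_algebra.
From mathcomp Require Import boolp classical_sets reals.
Set Implicit Arguments. Unset Strict Implicit. Unset Printing Implicit Defensive.
Import Order.TTheory GRing.Theory Num.Theory.
Local Open Scope ring_scope.
Local Open Scope classical_set_scope.

(* A directed graph on a finite vertex set V is an edge relation E : rel V
   (no multi-edges by construction). Edge (u,v) exists iff E u v. *)

Definition acyclic (V : finType) (E : rel V) : Prop :=
  forall (x : V) (p : seq V), path E x p -> last x p = x -> p = [::].

Definition st_path_exists (V : finType) (E : rel V) (s t : V) : Prop :=
  exists p : seq V, path E s p /\ last s p = t.

Definition is_flow (R : realType) (V : finType) (E : rel V)
    (C : V -> V -> R) (s t : V) (f : V -> V -> R) : Prop :=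
  (forall u v, E u v -> 0 <= f u v <= C u v) /\
  (forall v, v != s -> v != t ->
     \sum_(u | E u v) f u v = \sum_(w | E v w) f v w).

Definition flow_val (R : realType) (V : finType) (E : rel V)
    (s : V) (f : V -> V -> R) : R :=
  \sum_(u | E s u) f s u.

(* A user path i is a directed walk x i :: ps i in G; its edge set is the
   set of consecutive pairs. *)
Definition on_path (V : finType) (x : V) (p : seq V) (u v : V) : bool :=
  (u, v) \in zip (x :: p) p.

Definition user_paths (R : realType) (V : finType) (E : rel V)
    (C : V -> V -> R) (k : nat) (x : 'I_k -> V) (ps : 'I_k -> seq V)
    (lam : 'I_k -> R) : Prop :=
  (forall i, path E (x i) (ps i)) /\
  (forall i, 0 <= lam i) /\
  (forall u v, E u v -> \sum_(i | on_path (x i) (ps i) u v) lam i <= C u v).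

Definition T_feasible (R : realType) (V : finType) (E : rel V)
    (C : V -> V -> R) (f : V -> V -> R) (k : nat) (x : 'I_k -> V)
    (ps : 'I_k -> seq V) (lam : 'I_k -> R) (lt : 'I_k -> R) : Prop :=
  (forall u v, E u v ->
     \sum_(i | on_path (x i) (ps i) u v) lt i <= C u v - f u v) /\
  (forall i, 0 <= lt i <= lam i).

(* T(f,P): the optimal value of the LP (supremum of the objective over the
   feasible region, which is nonempty and compact). *)
Definition Tval (R : realType) (V : finType) (E : rel V)
    (C : V -> V -> R) (f : V -> V -> R) (k : nat) (x : 'I_k -> V)
    (ps : 'I_k -> seq V) (lam : 'I_k -> R) : R :=
  sup [set \sum_(i < k) lt i | lt in T_feasible E C f x ps lam].

Definition Lambda (R : realType) (V : finType) (E : rel V)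
    (C : V -> V -> R) (f : V -> V -> R) (k : nat) (x : 'I_k -> V)
    (ps : 'I_k -> seq V) (lam : 'I_k -> R) : R :=
  \sum_(i < k) lam i - Tval E C f x ps lam.

(* Main.v *)
Require Import Defs.
From HB Require Import structures.
From mathcomp Require Import all_boot all_order all_algebra.
From mathcomp Require Import boolp classical_sets reals.
Import Order.TTheory GRing.Theory Num.Theory.
Local Open Scope ring_scope.

Section Aux.
Variables (V : finType) (E : rel V).

Lemma no_cycle : acyclic E -> forall u v, E u v -> connect E v u -> False.
Proof.
move=> ac u v euv /connectP[p pp lp].
have := ac u (v :: p); rewrite /= euv pp => /(_ isT); rewrite -lp.
by move=> /(_ erefl).
Qed.

Lemma zip_belast (x : V) p : zip (x :: p) p = zip (belast x p) p.
Proof. by elim: p x => //= y p IH x; rewrite IH. Qed.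

Lemma path_zip (x : V) p u v : path E x p -> (u, v) \in zip (x :: p) p -> E u v.
Proof.
elim: p x => //= y p IH x /andP[exy pp]; rewrite inE => /orP[/eqP[-> ->]//|].
exact: IH.
Qed.

Lemma sum_count_snd (z : seq (V * V)) v :
  (\sum_u count_mem (u, v) z = count_mem v (unzip2 z))%N.
Proof.
elim: z => [|[a b] z IH] /=; first by rewrite big1.
rewrite big_split /= IH; congr (_ + _)%N.
case: (eqVneq b v) => [->|nb].
  rewrite (bigD1 a) //= eqxx big1 // => u /negbTE nu.
  by rewrite xpair_eqE eq_sym nu.
by rewrite big1 // => u _; rewrite xpair_eqE (negbTE nb) andbF.
Qed.

Lemma sum_count_fst (z : seq (V * V)) v :
  (\sum_u count_mem (v, u) z = count_mem v (unzip1 z))%N.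
Proof.
elim: z => [|[a b] z IH] /=; first by rewrite big1.
rewrite big_split /= IH; congr (_ + _)%N.
case: (eqVneq a v) => [->|nb].
  rewrite (bigD1 b) //= eqxx big1 // => u /negbTE nu.
  by rewrite xpair_eqE eq_sym nu andbF.
by rewrite big1 // => u _; rewrite xpair_eqE (negbTE nb).
Qed.

Lemma count_pair_le (z : seq (V * V)) u v :
  (count_mem (u, v) z <= count_mem u (unzip1 z))%N.
Proof.
rewrite count_map; apply: sub_count => pr /eqP -> /=; exact: eqxx.
Qed.

End Aux.

Section Cut.
Variables (R : realType) (V : finType) (E : rel V) (f : V -> V -> R).

Let g x w := if E x w then f x w else 0.
Let outf x := \sum_(w | E x w) f x w.
Let inf x := \sum_(u | E u x) f u x.

Lemma sum_ge_term (I : finType) (P : pred I) (F : I -> R) i :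
  P i -> (forall j, P j -> 0 <= F j) -> F i <= \sum_(j | P j) F j.
Proof.
move=> Pi F0; rewrite (bigD1 i) //= lerDl sumr_ge0 // => j /andP[Pj _].
exact: F0.
Qed.

Lemma cut_id (A : pred V) :
  \sum_(x in A) (outf x - inf x) =
  \sum_(x in A) \sum_(w | w \notin A) g x w -
  \sum_(x in A) \sum_(u | u \notin A) g u x.
Proof.
have eo x : outf x = \sum_(w in A) g x w + \sum_(w | w \notin A) g x w.
  by rewrite /outf big_mkcond /= (bigID [pred w | w \in A]).
have ei x : inf x = \sum_(u in A) g u x + \sum_(u | u \notin A) g u x.
  by rewrite /inf big_mkcond /= (bigID [pred w | w \in A]).
rewrite sumrB; under eq_bigr do rewrite eo.
under [X in _ - X]eq_bigr do rewrite ei.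
rewrite !big_split /= (exchange_big _ _ _ _ _ (fun x u => g u x)) /=.
by rewrite opprD addrACA subrr add0r.
Qed.

End Cut.

Lemma edge_le_val (R : realType) (V : finType) (E : rel V) (C : V -> V -> R)
  (s t : V) (f : V -> V -> R) :
  acyclic E -> connect E s t -> s != t -> is_flow E C s t f ->
  forall a b, E a b -> f a b <= flow_val E s f.
Proof.
move=> ac cst nst [cap cons] a b eab.
have f0 u v : E u v -> 0 <= f u v by move=> /cap /andP[].
have val0 : 0 <= flow_val E s f by apply: sumr_ge0 => u; apply: f0.
have nc := @no_cycle _ E ac.
set g := fun x w => if E x w then f x w else 0.
have g0 x w : 0 <= g x w by rewrite /g; case: ifP => // /f0.
have cid := @cut_id R V E f.
case: (boolP (connect E t a)) => [cta|ncta].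
  pose B := [pred x | connect E b x].
  have Bz : \sum_(x in B) ((\sum_(w | E x w) f x w) - \sum_(u | E u x) f u x) = 0.
    apply: big1 => x xB; apply/eqP; rewrite subr_eq0 eq_sym; apply/eqP; apply: cons.
      apply/negP => /eqP exs; apply: (nc a b eab); rewrite -exs in cst.
      exact: connect_trans (connect_trans xB cst) cta.
    apply/negP => /eqP ext; apply: (nc a b eab); rewrite -ext in cta.
    exact: connect_trans xB cta.
  have o0 : \sum_(x in B) \sum_(w | w \notin B) g x w = 0.
    apply: big1 => x xB; apply: big1 => w wB; rewrite /g; case: ifP => // exw.
    by move: wB; rewrite inE (connect_trans xB (connect1 exw)).
  have HB : \sum_(x in B) ((\sum_(w | E x w) f x w) - \sum_(u | E u x) f u x) =
    \sum_(x in B) \sum_(w | w \notin B) g x w - \sum_(x in B) \sum_(u | u \notin B) g u x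
    := cid B.
  move: HB; rewrite Bz o0 sub0r => /eqP; rewrite eq_sym oppr_eq0 => /eqP H.
  have aB : a \notin B by apply/negP => ba; exact: nc a b eab ba.
  have : g a b <= \sum_(x in B) \sum_(u | u \notin B) g u x.
      apply: (le_trans (@sum_ge_term R V (fun u => u \notin B) (fun u => g u b) a aB _)).
      by move=> j _.
    apply: (@sum_ge_term R V (fun x => x \in B) (fun x => \sum_(u | u \notin B) g u x) b).
      exact: connect0.
    by move=> j _; apply: sumr_ge0.
  by rewrite H /g eab => /le_trans; apply.
pose A := [pred x | connect E x a && ~~ connect E t x].
have tA : t \notin A by rewrite inE connect0 andbF.
have aA : a \in A by rewrite inE connect0.
have bA : b \notin A by rewrite inE; apply/negP => /andP[ba _]; exact: nc a b eab ba.
have i0 : \sum_(x in A) \sum_(u | u \notin A) g u x = 0.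
  apply: big1 => x xA; apply: big1 => u uA; rewrite /g; case: ifP => // eux.
  move: uA; rewrite inE; move: xA; rewrite inE => /andP[xa ntx].
  rewrite (connect_trans (connect1 eux) xa) /=; rewrite negbK => tu.
  by move: ntx; rewrite (connect_trans tu (connect1 eux)).
have : g a b <= \sum_(x in A) \sum_(w | w \notin A) g x w.
  apply: (le_trans (@sum_ge_term R V (fun u => u \notin A) (fun u => g a u) b bA _)).
    by move=> j _.
  apply: (@sum_ge_term R V (fun x => x \in A) (fun x => \sum_(u | u \notin A) g x u) a).
    exact: aA.
  by move=> j _; apply: sumr_ge0.
have HA : \sum_(x in A) ((\sum_(w | E x w) f x w) - \sum_(u | E u x) f u x) =
  \sum_(x in A) \sum_(w | w \notin A) g x w - \sum_(x in A) \sum_(u | u \notin A) g u x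
  := cid A.
rewrite i0 subr0 in HA; rewrite -HA /g eab => /le_trans; apply.
pose h x := if x == s then flow_val E s f else 0.
apply: (@le_trans _ _ (\sum_(x in A) h x)).
  apply: ler_sum => x xA; rewrite /h; case: eqP => [->|/eqP nxs].
    rewrite /flow_val lerBlDr lerDl; apply: sumr_ge0 => u; exact: f0.
  rewrite cons //; first by rewrite subrr.
  by apply/negP => /eqP ext; move: tA; rewrite -ext xA.
rewrite big_mkcond /= (bigD1 s) //= big1 => [|x /negbTE nxs]; last first.
  by rewrite /h nxs; case: (x \in A).
by rewrite addr0 /h eqxx; case: (s \in A).
Qed.

Lemma Tval_mono (R : realType) (V : finType) (E : rel V) (C : V -> V -> R)
  (f f' : V -> V -> R) (k : nat) (x : 'I_k -> V) (ps : 'I_k -> seq V) (lam : 'I_k -> R) :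
  (forall u v, E u v -> f u v <= f' u v) -> (forall u v, E u v -> f' u v <= C u v) ->
  user_paths E C x ps lam ->
  Tval E C f' x ps lam <= Tval E C f x ps lam.
Proof.
move=> ff' f'C [_ [lam0 _]]; rewrite /Tval; apply: ge_sup.
  exists 0, (fun _ => 0); last by rewrite big1.
  split; last by move=> i; rewrite lexx lam0.
  by move=> u v euv; rewrite big1 // subr_ge0 f'C.
move=> y [lt [feas lt0] <-]; apply: ub_le_sup.
  exists (\sum_(i < k) lam i) => z [l [_ l0] <-]; apply: ler_sum => i _.
  by case/andP: (l0 i).
exists lt => //; split => // u v euv; apply: le_trans (feas u v euv) _.
by rewrite lerD2l lerN2 ff'.
Qed.

Theorem mainTheorem1 (R : realType) (V : finType) (E : rel V)
    (C : V -> V -> R) (s t : V) (gamma : R) :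
  irreflexive E -> acyclic E ->
  (forall u v, E u v -> 0 <= C u v) ->
  s != t -> st_path_exists E s t ->
  0 < gamma -> (forall u v, E u v -> gamma <= C u v) ->
  forall f : V -> V -> R, is_flow E C s t f -> flow_val E s f < gamma ->
  exists f' : V -> V -> R,
    [/\ is_flow E C s t f', flow_val E s f' = gamma &
      forall (k : nat) (x : 'I_k -> V) (ps : 'I_k -> seq V) (lam : 'I_k -> R),
        user_paths E C x ps lam ->
        Lambda E C f x ps lam <= Lambda E C f' x ps lam].
Proof.
move=> _ ac C0 nst [p0 [pp0 lp0]] g0 gC f fl fv.
have cst : connect E s t by apply/connectP; exists p0.
have ebound := @edge_le_val R V E C s t f ac cst nst fl.
case: fl => [cap cons].
move: lp0; case: (shortenP pp0) => p pp up _ lp.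
pose d := gamma - flow_val E s f.
have d0 : 0 < d by rewrite subr_gt0.
pose m u v := count_mem (u, v) (zip (s :: p) p).
have eb : unzip1 (zip (s :: p) p) = belast s p.
  by rewrite zip_belast unzip1_zip // size_belast.
have e2 : unzip2 (zip (s :: p) p) = p by rewrite unzip2_zip //= leqnSn.
have cI v : count_mem v (s :: p) = (count_mem v (belast s p) + (t == v))%N.
  by rewrite lastI lp -cats1 count_cat /= addn0.
have c1 v : (count_mem v (s :: p) <= 1)%N by rewrite count_uniq_mem // leq_b1.
have m1 u v : (m u v <= 1)%N.
  apply: leq_trans (@count_pair_le V _ u v) _; rewrite eb.
  by apply: leq_trans (c1 u); rewrite cI leq_addr.
have mE u v : ~~ E u v -> m u v = 0%N.
  move=> nE; apply/eqP; rewrite -leqn0 leqNgt -has_count has_pred1.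
  by apply/negP => /(@path_zip V E _ _ _ _ pp); apply/negP.
have sin v : (\sum_(u | E u v) m u v = count_mem v p)%N.
  rewrite -e2 -sum_count_snd big_mkcond /=; apply: eq_bigr => u _.
  by case: ifP => // /negbT /mE; rewrite /m => ->.
have sout v : (\sum_(w | E v w) m v w = count_mem v (belast s p))%N.
  rewrite -eb -sum_count_fst big_mkcond /=; apply: eq_bigr => u _.
  by case: ifP => // /negbT /mE; rewrite /m => ->.
pose f' u v := f u v + d * (m u v)%:R.
have sumf' (P : pred V) (F : V -> R) (G : V -> nat) :
    \sum_(u | P u) (F u + d * (G u)%:R) = \sum_(u | P u) F u + d * (\sum_(u | P u) G u)%:R.
  by rewrite big_split /= natr_sum mulr_sumr.
have fvf : flow_val E s f' = gamma.
  rewrite /flow_val sumf' sout.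
  have := cI s; rewrite count_uniq_mem // mem_head eq_sym (negbTE nst) addn0 => <-.
  by rewrite /d mulr1 addrC subrK.
exists f'; split => //.
- split.
    move=> u v euv; rewrite /f'; case/andP: (cap u v euv) => fu fC.
    have := m1 u v; case: (m u v) => [|[|]] // _.
      by rewrite mulr0 addr0 fu fC.
    rewrite mulr1 addr_ge0 ?(ltW d0) //=.
    apply: le_trans (gC u v euv); rewrite /d addrC -lerBrDl opprB addrC subrK.
    exact: ebound.
  move=> v vs vt; rewrite /f' !sumf' sin sout (cons v vs vt); congr (_ + d * _%:R).
  have := cI v; rewrite /= eq_sym (negbTE vs) eq_sym (negbTE vt) addn0 add0n => ->.
  by [].
- move=> k x ps lam up'; rewrite /Lambda lerD2l lerN2.
  apply: Tval_mono up'.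
    by move=> u v _; rewrite /f' lerDl mulr_ge0 // ltW.
  move=> u v euv; rewrite /f'; case/andP: (cap u v euv) => fu fC.
  have := m1 u v; case: (m u v) => [|[|]] // _.
    by rewrite mulr0 addr0.
  rewrite mulr1; apply: le_trans (gC u v euv).
  by rewrite /d addrC -lerBrDl opprB addrC subrK; exact: ebound.
Qed.
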